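(* Let $2\le f_1\le f_2\le\dots\le f_n$ be integers forming a Pinwheel instance whose density $D=\sum_{i=1}^n 1/f_i$ satisfies $D\le 1-3/\sqrt{f_1}$. Then the instance is feasible, i.e., there is an infinite sequence over $\{1,\dots,n\}$ in which, for every $i$, every block of $f_i$ consecutive entries contains at least one occurrence of $i$.
   Context: Pinwheel problem: given integer frequencies $2\le f_1\le\dots\le f_n$, a schedule is an infinite sequence of indices from $\{1,\dots,n\}$ such that for each $i$, any $f_i$ consecutive elements of the sequence include index $i$. The instance is feasible if a schedule exists. Its density is $\sum_i 1/f_i$. *)

(* Defs.v *)
From Stdlib Require Import Reals Lra Lia Arith List.
Open Scope R_scope.

(* A Pinwheel instance with n tasks is given by a frequency function
   f : nat -> nat, of which only f 0, ..., f (n-1) matter (task i is index i,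
   0-based, corresponding to task i+1 in the paper). *)

Definition is_schedule (n : nat) (f : nat -> nat) (s : nat -> nat) : Prop :=
  (forall t, (s t < n)%nat) /\
  (forall i t, (i < n)%nat ->
     exists k, (t <= k < t + f i)%nat /\ s k = i).

Definition feasible (n : nat) (f : nat -> nat) : Prop :=
  exists s : nat -> nat, is_schedule n f s.

Definition density (n : nat) (f : nat -> nat) : R :=
  fold_right Rplus 0 (map (fun i => / INR (f i)) (seq 0 n)).

(* Main.v *)
Require Import Defs.
From Stdlib Require Import Reals Lra Lia Arith List Classical ClassicalEpsilon.
Local Open Scope nat_scope.

Fixpoint rv (a t : nat) : nat :=
  match a with 0 => 0 | S a' => (t mod 2) * 2 ^ a' + rv a' (t / 2) end.

Lemma pow2_pos : forall a, 0 < 2 ^ a.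
Proof. intro a. apply Nat.neq_0_lt_0, Nat.pow_nonzero. lia. Qed.

Lemma rv_lt : forall a t, rv a t < 2 ^ a.
Proof.
  induction a; intro t; cbn [rv]. simpl; lia. rewrite Nat.pow_succ_r'.
  pose proof (IHa (t/2)). pose proof (Nat.mod_upper_bound t 2 ltac:(lia)).
  assert (t mod 2 * 2^a <= 1 * 2^a) by (apply Nat.mul_le_mono_r; lia). lia.
Qed.

Lemma rv_per : forall a t k, rv a (t + k * 2 ^ a) = rv a t.
Proof.
  induction a; intros t k; cbn [rv]. reflexivity. rewrite Nat.pow_succ_r'.
  replace (t + k * (2 * 2 ^ a)) with (t + (k * 2 ^ a) * 2) by ring.
  rewrite Nat.Div0.mod_add, Nat.div_add by lia. rewrite IHa. reflexivity.
Qed.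

Lemma rv_div : forall a b t, a <= b -> rv b t / 2 ^ (b - a) = rv a t.
Proof.
  induction a; intros b t H.
  - cbn [rv]. rewrite Nat.sub_0_r. apply Nat.div_small, rv_lt.
  - destruct b as [|b]; [lia|]. simpl rv. replace (S b - S a) with (b - a) by lia.
    replace (2 ^ b) with (2 ^ a * 2 ^ (b - a)).
    2:{ rewrite <- Nat.pow_add_r. f_equal. lia. }
    rewrite Nat.mul_assoc, Nat.div_add_l by (apply Nat.pow_nonzero; lia).
    rewrite IHa by lia. reflexivity.
Qed.

Lemma rv_surj : forall a y, y < 2 ^ a -> exists t, t < 2 ^ a /\ rv a t = y.
Proof.
  induction a; intros y H.
  - exists 0. simpl in *. split; lia.
  - rewrite Nat.pow_succ_r' in *. pose proof (pow2_pos a).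
    destruct (IHa (y mod 2 ^ a)) as [t' [Ht1 Ht2]]. apply Nat.mod_upper_bound; lia.
    assert (Hy1 : y / 2 ^ a < 2) by (apply Nat.Div0.div_lt_upper_bound; lia).
    exists (2 * t' + y / 2 ^ a). split. lia.
    cbn [rv]. replace ((2 * t' + y / 2 ^ a) mod 2) with (y / 2 ^ a).
    replace ((2 * t' + y / 2 ^ a) / 2) with t'. rewrite Ht2.
    pose proof (Nat.div_mod y (2^a) ltac:(lia)). lia.
    replace (2 * t' + y / 2 ^ a) with (y / 2 ^ a + t' * 2) by ring.
    rewrite Nat.div_add by lia. rewrite Nat.div_small; lia.
    replace (2 * t' + y / 2 ^ a) with (y / 2 ^ a + t' * 2) by ring.
    rewrite Nat.Div0.mod_add. rewrite Nat.mod_small; lia.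
Qed.

Definition Aof (c F : nat) : nat := Nat.log2 (F / c).
Definition Sof (c F : nat) : nat := F / 2 ^ Aof c F.

Lemma AS_spec : forall c F, 1 <= c -> c <= F ->
  c * 2 ^ Aof c F <= F /\ F < 2 * c * 2 ^ Aof c F /\
  c <= Sof c F /\ Sof c F < 2 * c /\
  Sof c F * 2 ^ Aof c F <= F /\ F < (Sof c F + 1) * 2 ^ Aof c F.
Proof.
  intros c F Hc HF. unfold Sof, Aof.
  set (q := F / c). assert (Hq : 1 <= q) by (apply Nat.div_le_lower_bound; lia).
  destruct (Nat.log2_spec q ltac:(lia)) as [L1 L2].
  set (A := Nat.log2 q) in *. rewrite Nat.pow_succ_r' in L2.
  pose proof (Nat.div_mod F c ltac:(lia)). pose proof (Nat.mod_upper_bound F c ltac:(lia)).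
  fold q in H. pose proof (pow2_pos A).
  assert (E1 : c * 2 ^ A <= F) by nia.
  assert (E2 : F < 2 * c * 2 ^ A) by nia.
  pose proof (Nat.div_mod F (2^A) ltac:(lia)). pose proof (Nat.mod_upper_bound F (2^A) ltac:(lia)).
  set (s := F / 2 ^ A) in *.
  assert (c <= s) by (apply Nat.div_le_lower_bound; lia).
  assert (s < 2 * c) by (apply Nat.Div0.div_lt_upper_bound; lia).
  repeat split; try lia; nia.
Qed.

Lemma Aof_mono : forall c F F', 1 <= c -> F <= F' -> Aof c F <= Aof c F'.
Proof. intros. unfold Aof. apply Nat.log2_le_mono, Nat.Div0.div_le_mono; lia. Qed.

Lemma x_mono : forall c F F', 1 <= c -> c <= F -> F <= F' ->
  Sof c F * 2 ^ Aof c F <= Sof c F' * 2 ^ Aof c F'.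
Proof.
  intros c F F' Hc HF HF'.
  pose proof (Aof_mono c F F' Hc HF').
  destruct (AS_spec c F Hc HF) as (_&_&_&S1&_).
  destruct (AS_spec c F' Hc ltac:(lia)) as (_&_&S2&_).
  destruct (Nat.eq_dec (Aof c F) (Aof c F')) as [E|E].
  - rewrite <- E. apply Nat.mul_le_mono_r. unfold Sof. rewrite <- E.
    apply Nat.Div0.div_le_mono; lia.
  - assert (2 ^ S (Aof c F) <= 2 ^ Aof c F') by (apply Nat.pow_le_mono_r; lia).
    rewrite Nat.pow_succ_r' in H0. nia.
Qed.

Fixpoint bb (f : nat -> nat) (c g : nat) : nat :=
  match g with 0 => 0 | S g' => bb f c g' + Sof c (f (bb f c g')) end.
Definition ag f c g := Aof c (f (bb f c g)).
Definition sg f c g := Sof c (f (bb f c g)).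

Lemma bb_S : forall f c g, bb f c (S g) = bb f c g + sg f c g.
Proof. reflexivity. Qed.

Lemma bb_mono : forall f c g h, g <= h -> bb f c g <= bb f c h.
Proof.
  intros f c g h H. induction H. lia. rewrite bb_S. lia.
Qed.

Lemma sg_spec : forall n f c g, 1 <= c -> (forall i, i < n -> c <= f i) -> bb f c g < n ->
  c * 2 ^ ag f c g <= f (bb f c g) /\ f (bb f c g) < 2 * c * 2 ^ ag f c g /\
  c <= sg f c g /\ sg f c g < 2 * c /\
  sg f c g * 2 ^ ag f c g <= f (bb f c g) /\ f (bb f c g) < (sg f c g + 1) * 2 ^ ag f c g.
Proof. intros. apply AS_spec; auto. Qed.

Lemma bb_ge : forall n f c, 1 <= c -> (forall i, i < n -> c <= f i) ->
  forall g, g <= bb f c g \/ n <= bb f c g.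
Proof.
  intros n f c Hc Hf g. induction g. left; lia.
  rewrite bb_S. destruct (Nat.lt_ge_cases (bb f c g) n) as [V|V].
  - destruct (sg_spec n f c g Hc Hf V) as (_&_&S1&_). lia.
  - right; lia.
Qed.

Lemma grp_of : forall n f c, 1 <= c -> (forall i, i < n -> c <= f i) ->
  forall i, i < n -> exists g, bb f c g <= i < bb f c (S g).
Proof.
  intros n f c Hc Hf i Hi.
  assert (HH : forall g, forall j, j < bb f c g -> exists h, bb f c h <= j < bb f c (S h)).
  { induction g; intros j Hj. simpl in Hj; lia.
    destruct (Nat.lt_ge_cases j (bb f c g)) as [L|L]. apply IHg; auto.
    exists g; lia. }
  apply (HH (S i)). destruct (bb_ge n f c Hc Hf (S i)); lia.
Qed.

Lemma ag_mono : forall n f c, 1 <= c -> (forall i, i < n -> c <= f i) ->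
  (forall i j, i <= j < n -> f i <= f j) ->
  forall g h, g <= h -> bb f c h < n -> ag f c g <= ag f c h.
Proof.
  intros n f c Hc Hf Hs g h H Hv. unfold ag. apply Aof_mono; auto.
  apply Hs. pose proof (bb_mono f c g h H). lia.
Qed.

Fixpoint ns (F : nat -> nat) (lo k : nat) : nat :=
  match k with 0 => 0 | S k' => F lo + ns F (S lo) k' end.

Lemma ns_split : forall F k1 k2 lo, ns F lo (k1 + k2) = ns F lo k1 + ns F (lo + k1) k2.
Proof.
  induction k1; intros k2 lo; simpl. rewrite Nat.add_0_r; auto.
  rewrite IHk1. replace (S lo + k1) with (lo + S k1) by lia. lia.
Qed.

Lemma ns_ext : forall F G k lo, (forall j, lo <= j < lo + k -> F j = G j) -> ns F lo k = ns G lo k.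
Proof.
  induction k; intros lo H; simpl. auto. rewrite H by lia. rewrite (IHk (S lo)). auto.
  intros; apply H; lia.
Qed.

Lemma ns_mul : forall F m k lo, ns (fun j => m * F j) lo k = m * ns F lo k.
Proof. induction k; intro lo; simpl. lia. rewrite IHk. lia. Qed.

Definition Ng f c g := ns (fun k => 2 ^ (ag f c g - ag f c k)) 0 g.

Lemma Ng_key : forall n f c, 1 <= c -> (forall i, i < n -> c <= f i) ->
  (forall i j, i <= j < n -> f i <= f j) ->
  forall g h, g < h -> bb f c h < n ->
  2 ^ (ag f c h - ag f c g) * (Ng f c g + 1) <= Ng f c h.
Proof.
  intros n f c Hc Hf Hs g h Hgh Hv. unfold Ng.
  replace h with (S g + (h - S g)) at 2 by lia. rewrite ns_split.
  replace (S g) with (g + 1) at 1 by lia. rewrite ns_split. simpl.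
  assert (E : ns (fun k => 2 ^ (ag f c h - ag f c k)) 0 g =
     2 ^ (ag f c h - ag f c g) * ns (fun k => 2 ^ (ag f c g - ag f c k)) 0 g).
  { rewrite <- ns_mul. apply ns_ext.
    intros j Hj. rewrite <- Nat.pow_add_r. f_equal.
    pose proof (ag_mono n f c Hc Hf Hs j g ltac:(lia) ltac:(pose proof (bb_mono f c g h); lia)).
    pose proof (ag_mono n f c Hc Hf Hs g h ltac:(lia) Hv). lia. }
  rewrite E. nia.
Qed.

Lemma disjoint : forall n f c, 1 <= c -> (forall i, i < n -> c <= f i) ->
  (forall i j, i <= j < n -> f i <= f j) ->
  forall g h t, g < h -> bb f c h < n ->
  rv (ag f c g) t = Ng f c g -> rv (ag f c h) t = Ng f c h -> False.
Proof.
  intros n f c Hc Hf Hs g h t Hgh Hv E1 E2.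
  pose proof (Ng_key n f c Hc Hf Hs g h Hgh Hv).
  pose proof (ag_mono n f c Hc Hf Hs g h ltac:(lia) Hv).
  pose proof (rv_div (ag f c g) (ag f c h) t H0). rewrite E1, E2 in H1.
  assert (Ng f c g + 1 <= Ng f c h / 2 ^ (ag f c h - ag f c g)).
  { apply Nat.div_le_lower_bound. apply Nat.pow_nonzero; lia. lia. }
  lia.
Qed.

Lemma mod_hit : forall m s p, p < s -> exists d, d < s /\ (m + d) mod s = p.
Proof.
  intros m s p H.
  pose proof (Nat.div_mod m s ltac:(lia)). pose proof (Nat.mod_upper_bound m s ltac:(lia)).
  destruct (Nat.le_gt_cases (m mod s) p).
  - exists (p - m mod s). split. lia. symmetry. apply (Nat.mod_unique _ _ (m / s)); lia.
  - exists (s + p - m mod s). split. lia. symmetry. apply (Nat.mod_unique _ _ (m / s + 1)); lia.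
Qed.

Definition mem f c g t := bb f c g + ((t / 2 ^ ag f c g) mod sg f c g).

Lemma feasible_of : forall n f c, 1 <= n -> 1 <= c -> (forall i, i < n -> c <= f i) ->
  (forall i j, i <= j < n -> f i <= f j) ->
  (forall g, bb f c g < n -> Ng f c g < 2 ^ ag f c g) -> feasible n f.
Proof.
  intros n f c Hn Hc Hf Hs HN.
  assert (Ex : forall t, exists v, v < n /\ forall g, bb f c g < n -> rv (ag f c g) t = Ng f c g ->
                 mem f c g t < n -> v = mem f c g t).
  { intro t.
    destruct (classic (exists g, bb f c g < n /\ rv (ag f c g) t = Ng f c g /\ mem f c g t < n))
      as [[g0 (V0 & R0 & M0)]|NE].
    - exists (mem f c g0 t). split. auto. intros g V R M.
      destruct (Nat.lt_total g g0) as [L|[L|L]].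
      + exfalso. apply (disjoint n f c Hc Hf Hs g g0 t L V0 R R0).
      + subst; auto.
      + exfalso. apply (disjoint n f c Hc Hf Hs g0 g t L V R0 R).
    - exists 0. split. lia. intros g V R M. exfalso. apply NE. exists g. auto. }
  exists (fun t => proj1_sig (constructive_indefinite_description _ (Ex t))).
  split.
  - intro t. destruct (constructive_indefinite_description _ (Ex t)) as [v Hv]. simpl. apply Hv.
  - intros i t Hi.
    destruct (grp_of n f c Hc Hf i Hi) as [g [G1 G2]]. rewrite bb_S in G2.
    assert (V : bb f c g < n) by lia.
    destruct (sg_spec n f c g Hc Hf V) as (_&_&S1&_&S3&_).
    set (a := ag f c g) in *. set (P := 2 ^ a) in *. set (s0 := sg f c g) in *.
    assert (HP : 0 < P) by apply pow2_pos.
    destruct (rv_surj a (Ng f c g) (HN g V)) as [t0 [T1 T2]]. fold P in T1.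
    set (j1 := (t + (P - 1 - t0)) / P).
    pose proof (Nat.div_mod (t + (P - 1 - t0)) P ltac:(lia)).
    pose proof (Nat.mod_upper_bound (t + (P - 1 - t0)) P ltac:(lia)). fold j1 in H, H0.
    destruct (mod_hit j1 s0 (i - bb f c g) ltac:(lia)) as [d [D1 D2]].
    set (k := t0 + (j1 + d) * P).
    assert (Hfi : f (bb f c g) <= f i) by (apply Hs; lia).
    exists k. split. split; nia.
    assert (Rk : rv a k = Ng f c g) by (unfold k, P; rewrite rv_per; auto).
    assert (Mk : mem f c g k = i).
    { unfold mem. fold a. fold P. fold s0. unfold k.
      rewrite Nat.div_add by lia. rewrite Nat.div_small by lia. simpl. rewrite D2. lia. }
    destruct (constructive_indefinite_description _ (Ex k)) as [v Hv]. simpl.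
    destruct Hv as [_ Hv2]. rewrite (Hv2 g V Rk) by lia. auto.
Qed.
Open Scope R_scope.

Fixpoint rs (F : nat -> R) (lo k : nat) : R :=
  match k with O => 0 | S k' => F lo + rs F (S lo) k' end.

Lemma density_rs : forall n f, density n f = rs (fun i => / INR (f i)) 0 n.
Proof.
  intros n f. unfold density. generalize 0%nat. induction n; intro lo; simpl; auto.
  rewrite IHn. auto.
Qed.

Lemma rs_split : forall F k1 k2 lo, rs F lo (k1 + k2) = rs F lo k1 + rs F (lo + k1) k2.
Proof.
  induction k1; intros k2 lo; simpl. rewrite Nat.add_0_r; ring.
  rewrite IHk1. replace (S lo + k1)%nat with (lo + S k1)%nat by lia. ring.
Qed.

Lemma rs_ext : forall F G k lo, (forall j, (lo <= j < lo + k)%nat -> F j = G j) -> rs F lo k = rs G lo k.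
Proof.
  induction k; intros lo H; simpl. auto. rewrite H by lia. rewrite (IHk (S lo)). auto.
  intros; apply H; lia.
Qed.

Lemma rs_le : forall F G k lo, (forall j, (lo <= j < lo + k)%nat -> F j <= G j) -> rs F lo k <= rs G lo k.
Proof.
  induction k; intros lo H; simpl. lra. pose proof (H lo ltac:(lia)).
  pose proof (IHk (S lo) ltac:(intros; apply H; lia)). lra.
Qed.

Lemma rs_const : forall m k lo, rs (fun _ => m) lo k = INR k * m.
Proof. induction k; intro lo; simpl rs. simpl; ring. rewrite IHk, S_INR. ring. Qed.

Lemma rs_mul : forall F m k lo, rs (fun j => m * F j) lo k = m * rs F lo k.
Proof. induction k; intro lo; simpl. ring. rewrite IHk. ring. Qed.

Lemma INR_ns : forall F k lo, INR (ns F lo k) = rs (fun j => INR (F j)) lo k.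
Proof. induction k; intro lo; simpl ns; simpl rs. auto. rewrite plus_INR, IHk. auto. Qed.

Lemma rs_nonneg : forall F k lo, (forall j, (lo <= j < lo + k)%nat -> 0 <= F j) -> 0 <= rs F lo k.
Proof.
  intros. replace 0 with (rs (fun _ => 0) lo k) at 1.
  apply rs_le. auto. rewrite rs_const. ring.
Qed.

Lemma Rdiv_le_0_compat : forall a b, 0 <= a -> 0 < b -> 0 <= a / b.
Proof. intros. unfold Rdiv. apply Rmult_le_pos. auto. left; apply Rinv_0_lt_compat; auto. Qed.

Definition Gf (c u x : R) : R :=
  if Rle_dec x (2 * c * u) then 1 + (2 * c * u - x) / (c * u) else 2 * c * u / x.

Lemma Gf_x0 : forall c u, 0 < c -> 0 < u -> Gf c u (c * u) = 2.
Proof.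
  intros. unfold Gf. destruct (Rle_dec (c*u) (2*c*u)). field. nra. nra.
Qed.

Lemma Gtele : forall c u x y w, 0 < u -> 1 <= c -> c * u <= x -> x <= y -> 0 < w ->
  w <= / u -> w * x <= 2 * c -> w * (1 - x / y) <= (Gf c u x - Gf c u y) / u.
Proof.
  intros c u x y w Hu Hc Hx Hxy Hw Hwu Hwx.
  assert (Hcu : 0 < c * u) by nra.
  assert (Hy : 0 < y) by lra.
  assert (E : 1 - x / y = (y - x) / y) by (field; lra). rewrite E.
  unfold Gf. destruct (Rle_dec x (2*c*u)) as [Lx|Lx]; destruct (Rle_dec y (2*c*u)) as [Ly|Ly].
  -
    replace ((1 + (2 * c * u - x) / (c * u) - (1 + (2 * c * u - y) / (c * u))) / u)
      with ((y - x) / (c * u * u)) by (field; lra).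
    apply Rmult_le_compat_l with (r := y - x) in Hwu; [|lra].
    assert (w * ((y - x) / y) <= (y - x) / u * / y).
    { unfold Rdiv. rewrite <- Rmult_assoc. apply Rmult_le_compat_r.
      left; apply Rinv_0_lt_compat; lra. lra. }
    assert ((y - x) / u * / y <= (y - x) / (c * u * u)).
    { unfold Rdiv. rewrite Rmult_assoc. apply Rmult_le_compat_l. lra.
      rewrite <- Rinv_mult. apply Rinv_le_contravar. nra. nra. }
    lra.
  - assert (w * ((y - x) / y) <= /u * ((y - x) / y)).
    { apply Rmult_le_compat_r. apply Rdiv_le_0_compat; lra. auto. }
    assert ((y - x) / y <= 1 + (2 * c * u - x) / (c * u) - 2 * c * u / y).
    { assert ((2*c*u - x) / y <= (2 * c * u - x) / (c * u)).
      { unfold Rdiv. apply Rmult_le_compat_l. lra. apply Rinv_le_contravar; lra. }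
      replace ((y - x) / y) with (1 - x / y) by (field; lra).
      replace (2 * c * u / y) with ((2*c*u - x)/y + x / y) by (field; lra). lra. }
    unfold Rdiv at 2. rewrite (Rmult_comm _ (/u)).
    apply Rle_trans with (/ u * ((y - x) / y)). auto.
    apply Rmult_le_compat_l. left; apply Rinv_0_lt_compat; lra. auto.
  - exfalso. lra.
  - replace ((2 * c * u / x - 2 * c * u / y) / u) with (2 * c * ((y - x) / (x * y))) by (field; lra).
    assert (0 < x) by lra.
    replace (w * ((y - x) / y)) with ((w * x) * ((y - x) / (x * y))) by (field; lra).
    apply Rmult_le_compat_r. apply Rdiv_le_0_compat; nra. auto.
Qed.

Lemma Glast : forall c u x w, 0 < u -> 1 <= c -> c * u <= x -> 0 < w ->
  w <= / u -> w * x <= 2 * c -> w <= Gf c u x / u.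
Proof.
  intros c u x w Hu Hc Hx Hw Hwu Hwx. assert (Hcu : 0 < c * u) by nra.
  unfold Gf. destruct (Rle_dec x (2*c*u)).
  - assert (0 <= (2*c*u - x)/(c*u)) by (apply Rdiv_le_0_compat; lra).
    apply Rle_trans with (/u). auto. unfold Rdiv. rewrite Rmult_comm.
    rewrite <- (Rmult_1_r (/u)) at 1. apply Rmult_le_compat_l. left; apply Rinv_0_lt_compat; lra. lra.
  - assert (0 < x) by lra.
    replace (2 * c * u / x / u) with (2 * c / x) by (field; lra).
    apply Rmult_le_reg_r with x. auto. unfold Rdiv. rewrite Rmult_assoc, Rinv_l; lra.
Qed.

Definition W n f c h := if (bb f c h <? n)%nat then / INR (2 ^ ag f c h) else 0.
Definition Xg f c g := INR (sg f c g * 2 ^ ag f c g).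

Lemma INR_pow2_pos : forall a, 0 < INR (2 ^ a).
Proof. intro. apply lt_0_INR. apply pow2_pos. Qed.

Lemma step_facts : forall n f c u g, (1 <= c)%nat -> (forall i, (i < n)%nat -> (c <= f i)%nat) ->
  (forall g, (bb f c g < n)%nat -> (u <= 2 ^ ag f c g)%nat) -> (1 <= u)%nat ->
  (bb f c g < n)%nat ->
  0 < / INR (2 ^ ag f c g) /\ / INR (2 ^ ag f c g) <= / INR u /\
  / INR (2 ^ ag f c g) * Xg f c g = INR (sg f c g) /\ INR (sg f c g) < 2 * INR c /\
  INR c * INR u <= Xg f c g.
Proof.
  intros n f c u g Hc Hf Hu Hu1 V.
  pose proof (INR_pow2_pos (ag f c g)).
  destruct (sg_spec n f c g Hc Hf V) as (_&_&S1&S2&_).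
  pose proof (Hu g V).
  repeat split.
  - apply Rinv_0_lt_compat; auto.
  - apply Rinv_le_contravar. apply lt_0_INR; lia. apply le_INR; auto.
  - unfold Xg. rewrite mult_INR. field. lra.
  - replace 2 with (INR 2) by (simpl; ring). rewrite <- mult_INR. apply lt_INR; lia.
  - unfold Xg. rewrite <- mult_INR. apply le_INR. nia.
Qed.

Lemma member_bound : forall n f c u g, (1 <= c)%nat -> (forall i, (i < n)%nat -> (c <= f i)%nat) ->
  (forall i j, (i <= j < n)%nat -> (f i <= f j)%nat) ->
  (forall g, (bb f c g < n)%nat -> (u <= 2 ^ ag f c g)%nat) -> (1 <= u)%nat ->
  (bb f c (S g) < n)%nat ->
  / INR (2 ^ ag f c g) <= (1 + / INR c) * rs (fun i => / INR (f i)) (bb f c g) (sg f c g)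
     + (Gf (INR c) (INR u) (Xg f c g) - Gf (INR c) (INR u) (Xg f c (S g))) / INR u.
Proof.
  intros n f c u g Hc Hf Hs Hu Hu1 V'.
  assert (V : (bb f c g < n)%nat) by (pose proof (bb_mono f c g (S g)); lia).
  destruct (step_facts n f c u g Hc Hf Hu Hu1 V) as (W1&W2&W3&W4&W5).
  destruct (step_facts n f c u (S g) Hc Hf Hu Hu1 V') as (_&_&_&_&W5').
  assert (Hc' : 1 <= INR c) by (replace 1 with (INR 1) by auto; apply le_INR; auto).
  assert (Hu' : 0 < INR u) by (apply lt_0_INR; lia).
  assert (Xmono : Xg f c g <= Xg f c (S g)).
  { unfold Xg. apply le_INR. unfold sg, ag. apply x_mono. auto. apply Hf; auto.
    apply Hs. pose proof (bb_mono f c g (S g) ltac:(lia)). lia. }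
  set (X' := Xg f c (S g)) in *. set (X := Xg f c g) in *. set (w := / INR (2 ^ ag f c g)) in *.
  assert (HX' : 0 < X') by nra.
  assert (Hterm : forall i, (bb f c g <= i < bb f c g + sg f c g)%nat ->
            INR c / (X' * (INR c + 1)) <= / INR (f i)).
  { intros i Hi.
    destruct (sg_spec n f c (S g) Hc Hf V') as (_&_&T1&_&_&T2).
    assert (Hfi : (f i <= f (bb f c (S g)))%nat) by (apply Hs; pose proof (bb_S f c g); lia).
    assert (Hnat : (c * f i < (sg f c (S g) * 2 ^ ag f c (S g)) * (c + 1))%nat).
    { revert Hfi T1 T2. generalize (f (bb f c (S g))) (sg f c (S g)) (2 ^ ag f c (S g)) (f i).
      intros F S0 P fi H1 H2 H3. nia. }
    apply lt_INR in Hnat. rewrite !mult_INR, plus_INR in Hnat. simpl INR in Hnat.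
    assert (EX : X' = INR (sg f c (S g)) * INR (2 ^ ag f c (S g))) by (unfold X', Xg; apply mult_INR).
    rewrite <- EX in Hnat.
    assert (Hfpos : 0 < INR (f i)) by (apply lt_0_INR; pose proof (bb_S f c g); pose proof (Hf i ltac:(lia)); lia).
    replace (INR c / (X' * (INR c + 1))) with (/ (X' * (INR c + 1) / INR c)) by (field; lra).
    apply Rinv_le_contravar. auto.
    assert (Hic : / INR c * INR c = 1) by (field; lra).
    assert (0 < / INR c) by (apply Rinv_0_lt_compat; lra).
    unfold Rdiv. nra. }
  assert (Hrs : INR (sg f c g) * (INR c / (X' * (INR c + 1))) <= rs (fun i => / INR (f i)) (bb f c g) (sg f c g)).
  { rewrite <- (rs_const _ _ (bb f c g)). apply rs_le. auto. }
  assert (E1 : (1 + / INR c) * (INR (sg f c g) * (INR c / (X' * (INR c + 1)))) = INR (sg f c g) / X').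
  { field. lra. }
  assert (E2 : w - INR (sg f c g) / X' = w * (1 - X / X')).
  { rewrite <- W3. field. lra. }
  pose proof (Gtele (INR c) (INR u) X X' w Hu' Hc' W5 Xmono W1 W2 ltac:(lra)).
  assert ((1 + / INR c) * (INR (sg f c g) * (INR c / (X' * (INR c + 1)))) <=
          (1 + / INR c) * rs (fun i => / INR (f i)) (bb f c g) (sg f c g)).
  { apply Rmult_le_compat_l. assert (0 < / INR c) by (apply Rinv_0_lt_compat; lra). lra. auto. }
  lra.
Qed.

Lemma rs_zero : forall F k lo, (forall j, (lo <= j < lo + k)%nat -> F j = 0) -> rs F lo k = 0.
Proof.
  intros. replace 0 with (rs (fun _ => 0) lo k). apply rs_ext; auto. rewrite rs_const; ring.
Qed.

Lemma tail : forall n f c u, (1 <= c)%nat -> (forall i, (i < n)%nat -> (c <= f i)%nat) ->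
  (forall i j, (i <= j < n)%nat -> (f i <= f j)%nat) ->
  (forall g, (bb f c g < n)%nat -> (u <= 2 ^ ag f c g)%nat) -> (1 <= u)%nat ->
  forall k g, (n - g = k)%nat -> (bb f c g < n)%nat ->
  rs (W n f c) g (n - g) <= (1 + / INR c) * rs (fun i => / INR (f i)) (bb f c g) (n - bb f c g)
     + Gf (INR c) (INR u) (Xg f c g) / INR u.
Proof.
  intros n f c u Hc Hf Hs Hu Hu1 k. induction k as [|k IH]; intros g Hk V.
  - destruct (bb_ge n f c Hc Hf g); lia.
  - assert (Hgn : (g < n)%nat) by (destruct (bb_ge n f c Hc Hf g); lia).
    replace (n - g)%nat with (S (n - S g)) by lia. simpl rs at 1.
    assert (EW : W n f c g = / INR (2 ^ ag f c g)).
    { unfold W. destruct (Nat.ltb_spec (bb f c g) n); lia || auto. }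
    rewrite EW.
    assert (Hc' : 1 <= INR c) by (replace 1 with (INR 1) by auto; apply le_INR; auto).
    assert (Hu' : 0 < INR u) by (apply lt_0_INR; lia).
    assert (Hic : 0 < / INR c) by (apply Rinv_0_lt_compat; lra).
    destruct (Nat.lt_ge_cases (bb f c (S g)) n) as [V'|V'].
    + assert (Esplit : rs (fun i => / INR (f i)) (bb f c g) (n - bb f c g) =
       rs (fun i => / INR (f i)) (bb f c g) (sg f c g) +
       rs (fun i => / INR (f i)) (bb f c (S g)) (n - bb f c (S g))).
      { rewrite bb_S in *. replace (n - bb f c g)%nat with (sg f c g + (n - (bb f c g + sg f c g)))%nat by lia.
        rewrite rs_split. auto. }
      pose proof (IH (S g) ltac:(lia) V').
      pose proof (member_bound n f c u g Hc Hf Hs Hu Hu1 V').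
      rewrite Esplit. lra.
    + rewrite rs_zero.
      2:{ intros j Hj. unfold W. destruct (Nat.ltb_spec (bb f c j) n); auto.
          pose proof (bb_mono f c (S g) j ltac:(lia)). lia. }
      destruct (step_facts n f c u g Hc Hf Hu Hu1 V) as (W1&W2&W3&W4&W5).
      pose proof (Glast (INR c) (INR u) (Xg f c g) _ Hu' Hc' W5 W1 W2 ltac:(lra)).
      assert (0 <= rs (fun i => / INR (f i)) (bb f c g) (n - bb f c g)).
      { apply rs_nonneg. intros j Hj. left. apply Rinv_0_lt_compat, lt_0_INR.
        pose proof (Hf j ltac:(lia)). lia. }
      assert (0 <= (1 + / INR c) * rs (fun i => / INR (f i)) (bb f c g) (n - bb f c g)) by
        (apply Rmult_le_pos; lra).
      lra.
Qed.

Lemma final_ineq : forall (r U C M D : R),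
  3 < r -> r * r < (M + 1) * (M + 1) -> M * M <= r * r -> 0 <= M ->
  M + 1 <= U -> U <= 2 * M -> 1 <= C -> r * r - U + 1 <= C * U ->
  D <= 1 - 3 / r -> (1 + / C) * D + 2 / U <= 1.
Proof.
  intros r U C M D Hr H1 H2 HM HU1 HU2 HC HCU HD.
  assert (HrM : M <= r) by nra.
  assert (HrU : r < U) by nra.
  assert (HU2r : U <= 2 * r) by lra.
  assert (Hq : 0 <= (U - r) * (2 * r - U)) by (apply Rmult_le_pos; lra).
  assert (Hq2 : 0 <= r * ((U - r) * (2 * r - U))) by (apply Rmult_le_pos; lra).
  assert (Hpoly : (r - 3) * U * U <= (r * r - U) * (3 * U - 2 * r)) by nra.
  assert (Hk : (r - 3) * U <= C * (3 * U - 2 * r)).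
  { assert (C * U * (3 * U - 2 * r) >= (r * r - U) * (3 * U - 2 * r)) by nra.
    assert ((r - 3) * U * U <= C * (3 * U - 2 * r) * U) by nra. nra. }
  assert (HB : (1 + / C) * (1 - 3 / r) + 2 / U <= 1).
  { assert (E : (1 + / C) * (1 - 3 / r) + 2 / U = 1 + ((r - 3) * U - C * (3 * U - 2 * r)) / (C * r * U))
      by (field; repeat split; lra).
    rewrite E. assert (((r - 3) * U - C * (3 * U - 2 * r)) / (C * r * U) <= 0).
    { unfold Rdiv. assert (0 < / (C * r * U)) by (apply Rinv_0_lt_compat; nra). nra. }
    lra. }
  assert (0 < / C) by (apply Rinv_0_lt_compat; lra).
  assert ((1 + / C) * D <= (1 + / C) * (1 - 3 / r)) by (apply Rmult_le_compat_l; lra).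
  lra.
Qed.

Theorem mainTheorem2 (n : nat) (f : nat -> nat)
  (Hn : (1 <= n)%nat)
  (Hge2 : forall i, (i < n)%nat -> (2 <= f i)%nat)
  (Hsorted : forall i j, (i <= j < n)%nat -> (f i <= f j)%nat)
  (Hdens : density n f <= 1 - 3 / sqrt (INR (f 0%nat))) :
  feasible n f.
Proof.
  set (f0 := f 0%nat) in *.
  set (Fi := fun i => / INR (f i)).
  assert (HDpos : / INR f0 <= density n f).
  { rewrite density_rs. destruct n as [|n']; [lia|]. simpl rs.
    assert (0 <= rs (fun i => / INR (f i)) 1 n').
    { apply rs_nonneg. intros j Hj. left. apply Rinv_0_lt_compat, lt_0_INR.
      pose proof (Hge2 j ltac:(lia)). lia. }
    unfold f0. lra. }
  assert (Hf0pos : 0 < INR f0) by (apply lt_0_INR; pose proof (Hge2 0%nat ltac:(lia)); unfold f0; lia).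
  set (r := sqrt (INR f0)) in *.
  assert (Hrr : r * r = INR f0) by (apply sqrt_sqrt; lra).
  assert (Hr0 : 0 <= r) by apply sqrt_pos.
  assert (Hr3 : 3 < r).
  { assert (0 < / INR f0) by (apply Rinv_0_lt_compat; lra).
    destruct (Rle_lt_dec r 3) as [L|L]; auto. exfalso.
    destruct (Req_dec r 0) as [E|E]. rewrite E in Hrr. lra.
    assert (3 / r >= 1). { apply Rle_ge. apply Rmult_le_reg_r with r. lra.
      unfold Rdiv. rewrite Rmult_assoc, Rinv_l by lra. lra. }
    lra. }
  assert (Hf10 : (10 <= f0)%nat).
  { assert (9 < INR f0) by nra. destruct (Nat.lt_ge_cases f0 10); auto.
    assert (INR f0 <= INR 9) by (apply le_INR; lia). simpl in H1. lra. }
  set (m := Nat.sqrt f0).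
  destruct (Nat.sqrt_spec f0 ltac:(lia)) as [Hm1 Hm2]. fold m in Hm1, Hm2.
  assert (Hm3 : (3 <= m)%nat) by nia.
  set (a0 := S (Nat.log2 m)). set (u := (2 ^ a0)%nat).
  destruct (Nat.log2_spec m ltac:(lia)) as [Hl1 Hl2].
  assert (Hu1 : (m + 1 <= u)%nat) by (unfold u, a0; lia).
  assert (Hu2 : (u <= 2 * m)%nat) by (unfold u, a0; rewrite Nat.pow_succ_r'; lia).
  assert (Hupos : (0 < u)%nat) by lia.
  set (c := (f0 / u)%nat).
  assert (Hc1 : (1 <= c)%nat) by (apply Nat.div_le_lower_bound; nia).
  pose proof (Nat.div_mod f0 u ltac:(lia)). pose proof (Nat.mod_upper_bound f0 u ltac:(lia)).
  fold c in H, H0.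
  assert (Hcu1 : (c * u <= f0)%nat) by nia.
  assert (Hcu2 : (f0 + 1 <= c * u + u)%nat) by nia.
  assert (HA0 : Aof c f0 = a0).
  { unfold Aof. apply Nat.log2_unique. lia. split.
    apply Nat.div_le_lower_bound; lia.
    apply Nat.Div0.div_lt_upper_bound. rewrite Nat.pow_succ_r'. fold u. nia. }
  assert (HS0 : Sof c f0 = c) by (unfold Sof; rewrite HA0; reflexivity).
  assert (Hfc : forall i, (i < n)%nat -> (c <= f i)%nat).
  { intros i Hi. pose proof (Hsorted 0%nat i ltac:(lia)). fold f0 in H1. nia. }
  assert (Hu : forall g, (bb f c g < n)%nat -> (u <= 2 ^ ag f c g)%nat).
  { intros g V. unfold u. apply Nat.pow_le_mono_r. lia. rewrite <- HA0. unfold ag.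
    apply Aof_mono. auto. apply Hsorted. lia. }
  pose proof (tail n f c u Hc1 Hfc Hsorted Hu ltac:(lia) n 0%nat ltac:(lia) ltac:(simpl; lia)) as HT.
  simpl bb in HT. rewrite Nat.sub_0_r in HT.
  assert (EX0 : Xg f c 0 = INR c * INR u).
  { unfold Xg, sg, ag. simpl bb. fold f0. rewrite HS0, HA0. rewrite mult_INR. auto. }
  assert (HcR : 1 <= INR c) by (replace 1 with (INR 1) by auto; apply le_INR; auto).
  assert (HuR : 0 < INR u) by (apply lt_0_INR; lia).
  rewrite EX0, Gf_x0 in HT by lra.
  rewrite <- density_rs in HT.
  assert (Hfin : (1 + / INR c) * density n f + 2 / INR u <= 1).
  { apply (final_ineq r (INR u) (INR c) (INR m)); auto.
    - rewrite Hrr. replace (INR m + 1) with (INR (S m)) by (rewrite S_INR; auto).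
      rewrite <- mult_INR. apply lt_INR. auto.
    - rewrite Hrr, <- mult_INR. apply le_INR. auto.
    - apply pos_INR.
    - replace (INR m + 1) with (INR (S m)) by (rewrite S_INR; auto). apply le_INR. lia.
    - replace 2 with (INR 2) by auto. rewrite <- mult_INR. apply le_INR. auto.
    - rewrite Hrr. assert (INR (f0 + 1) <= INR (c * u + u)) by (apply le_INR; auto).
      rewrite plus_INR, plus_INR, mult_INR in H1. simpl in H1. lra. }
  assert (HW1 : rs (W n f c) 0 n <= 1) by (unfold Rdiv in *; lra).
  apply (feasible_of n f c Hn Hc1 Hfc Hsorted).
  intros g V.
  assert (Hgn : (g < n)%nat) by (destruct (bb_ge n f c Hc1 Hfc g); lia).
  assert (Hsum : (ns (fun k => 2 ^ (ag f c g - ag f c k)) 0 (S g) <= 2 ^ ag f c g)%nat).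
  { apply INR_le. rewrite INR_ns.
    rewrite (rs_ext _ (fun k => INR (2 ^ ag f c g) * W n f c k)).
    2:{ intros j Hj. unfold W.
        assert (Vj : (bb f c j < n)%nat) by (pose proof (bb_mono f c j g ltac:(lia)); lia).
        destruct (Nat.ltb_spec (bb f c j) n); [|lia].
        pose proof (ag_mono n f c Hc1 Hfc Hsorted j g ltac:(lia) V).
        replace (2 ^ ag f c g)%nat with (2 ^ (ag f c g - ag f c j) * 2 ^ ag f c j)%nat.
        2:{ rewrite <- Nat.pow_add_r. f_equal. lia. }
        rewrite mult_INR. field. apply Rgt_not_eq, INR_pow2_pos. }
    rewrite rs_mul.
    assert (rs (W n f c) 0 (S g) <= rs (W n f c) 0 n).
    { assert (E : rs (W n f c) 0 n = rs (W n f c) 0 (S g + (n - S g))) by (f_equal; lia). rewrite E, rs_split.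
      assert (0 <= rs (W n f c) (0 + S g) (n - S g)).
      { apply rs_nonneg. intros j _. unfold W. destruct (bb f c j <? n)%nat.
        left; apply Rinv_0_lt_compat, INR_pow2_pos. lra. }
      lra. }
    pose proof (INR_pow2_pos (ag f c g)).
    assert (INR (2 ^ ag f c g) * rs (W n f c) 0 (S g) <= INR (2 ^ ag f c g) * 1).
    { apply Rmult_le_compat_l; lra. }
    lra. }
  replace (S g) with (g + 1)%nat in Hsum by lia. rewrite ns_split in Hsum. simpl in Hsum.
  rewrite Nat.sub_diag in Hsum. unfold Ng. simpl in Hsum. lia.
Qed.
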